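(* For the $2$-server problem on the line and any parameter $\lambda\in[0,1]$, the algorithm LambdaDC satisfies, for every instance $I$ and every prediction with prediction error $\eta$, \[ \mathrm{LambdaDC}(I)\le \min\left\{(1+\lambda)\left(1+\frac{\eta}{\mathrm{OPT}(I)}\right),\ 1+\frac1\lambda\right\}\mathrm{OPT}(I)+c, \] with $c\ge0$ depending only on the initial configuration (where $1/\lambda=\infty$ for $\lambda=0$). Thus it is $(1+\lambda)$-consistent and $(1+1/\lambda)$-robust.
   Context: The $k$-server problem on the line (here $k=2$): servers on $\mathbb{R}$ labeled $s_1\le s_2$, requests $r_t\in\mathbb{R}$ revealed online, each served by moving a server to it; cost = total distance moved; $\mathrm{OPT}$ is the optimal offline cost. A prediction gives for each request $r_t$ an index $p_t\in\{1,2\}$; FtP serves each request with the predicted server (relabeling by position), and $\eta=\mathrm{FtP}(I)-\mathrm{OPT}(I)$. $\alpha$-consistent: cost $\le\alpha\,\mathrm{OPT}+c$ whenever $\eta=0$; $\beta$-robust: cost $\le\beta\,\mathrm{OPT}+c$ for all predictions. LambdaDC: if $r_t<s_1$ or $r_t>s_k$, move only the closest server; if $s_i<r_t<s_{i+1}$ and $p_t\le i$, move $s_i$ at speed $1$ and $s_{i+1}$ at speed $\lambda$ towards $r_t$ until one reaches it; if $p_t\ge i+1$, the speeds are swapped. *)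

(* Defs.v *)
From HB Require Import structures.
From mathcomp Require Import all_boot all_order all_algebra.
From mathcomp Require Import classical_sets reals.
Set Implicit Arguments. Unset Strict Implicit. Unset Printing Implicit Defensive.
Import Order.TTheory GRing.Theory Num.Theory.
Local Open Scope ring_scope.
Local Open Scope classical_set_scope.

(* Predicted server index p_t in {1,2}: S1 = leftmost server, S2 = rightmost. *)
Inductive srv := S1 | S2.

Section KServer.
Variable R : realType.

(* A configuration of the two servers, (s_1, s_2) with s_1 <= s_2 for the
   online algorithms (servers are relabeled by position). *)
Definition config := (R * R)%type.

Definition move_cost (c c' : config) : R := `|c'.1 - c.1| + `|c'.2 - c.2|.

Definition lambdaDC_step (lam : R) (c : config) (r : R) (p : srv) : config :=
  let: (a, b) := c in
  if r <= a then (r, b)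
  else if b <= r then (a, r)
  else
    let d1 := r - a in let d2 := b - r in
    match p with
    | S1 => (* s_1 at speed 1, s_2 at speed lam *)
        if lam * d1 <= d2 then (r, b - lam * d1) else (a + d2 / lam, r)
    | S2 => (* s_1 at speed lam, s_2 at speed 1 *)
        if lam * d2 <= d1 then (a + lam * d2, r) else (r, b - d1 / lam)
    end.

(* Total cost of LambdaDC on requests rs, with prediction p (p t is the
   prediction for the t-th request of the suffix, indexed from 0). *)
Fixpoint lambdaDC_cost (lam : R) (c : config) (rs : seq R) (p : nat -> srv) : R :=
  match rs with
  | [::] => 0
  | r :: rs' =>
      let c' := lambdaDC_step lam c r (p 0%N) in
      move_cost c c' + lambdaDC_cost lam c' rs' (fun t => p t.+1)
  end.

(* Follow-the-Prediction: move the predicted server (by position) to r,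
   then relabel by position. *)
Definition sort2 (x y : R) : config := if x <= y then (x, y) else (y, x).

Definition ftp_step (c : config) (r : R) (p : srv) : config * R :=
  let: (a, b) := c in
  match p with
  | S1 => (sort2 r b, `|r - a|)
  | S2 => (sort2 a r, `|r - b|)
  end.

Fixpoint ftp_cost (c : config) (rs : seq R) (p : nat -> srv) : R :=
  match rs with
  | [::] => 0
  | r :: rs' =>
      let cc := ftp_step c r (p 0%N) in
      cc.2 + ftp_cost cc.1 rs' (fun t => p t.+1)
  end.

(* Offline schedules: sched 0 is the initial configuration, sched t.+1 the
   configuration after serving request t; servers may move arbitrarily. *)
Definition valid_schedule (c0 : config) (rs : seq R) (sched : nat -> config) : Prop :=
  sched 0%N = c0 /\
  forall t : nat, (t < size rs)%N ->
    nth 0 rs t = (sched t.+1).1 \/ nth 0 rs t = (sched t.+1).2.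

Definition schedule_cost (rs : seq R) (sched : nat -> config) : R :=
  \sum_(t < size rs) move_cost (sched t) (sched t.+1).

Definition OPT (c0 : config) (rs : seq R) : R :=
  inf [set schedule_cost rs sched | sched in valid_schedule c0 rs].

Definition pred_error (c0 : config) (rs : seq R) (p : nat -> srv) : R :=
  ftp_cost c0 rs p - OPT c0 rs.

End KServer.

(* Main.v *)
Require Import Defs.
From HB Require Import structures.
From mathcomp Require Import all_boot all_order all_algebra.
From mathcomp Require Import classical_sets reals.
From mathcomp Require Import ring lra.
Import Order.TTheory GRing.Theory Num.Theory.
Set Implicit Arguments. Unset Strict Implicit.
Local Open Scope ring_scope.

Ltac normsplit :=
  repeat match goal with
  | |- context [ `|?t| ] => let h := fresh "hn" in
      first [ rewrite (@ger0_norm _ t); last by lra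
            | rewrite (@ler0_norm _ t); last by lra
            | case: (lerP 0 t) => h; [rewrite (ger0_norm h) | rewrite (ltr0_norm h)] ]
  | H : context [ `|?t| ] |- _ => let h := fresh "hn" in
      first [ rewrite (@ger0_norm _ t) in H; last by lra
            | rewrite (@ler0_norm _ t) in H; last by lra
            | case: (lerP 0 t) => h; [rewrite (ger0_norm h) in H | rewrite (ltr0_norm h) in H] ]
  end.

Section S.
Variable R : realType.

Definition Mt (c z : config R) : R := `|c.1 - z.1| + `|c.2 - z.2|.

Arguments Mt : simpl never.
Arguments sort2 : simpl never.
Arguments move_cost : simpl never.

Lemma sort2_sorted (x y : R) : (sort2 x y).1 <= (sort2 x y).2.
Proof. rewrite /sort2; case: (lerP x y) => h /=; lra. Qed.

Lemma Msort (a b x y : R) : a <= b ->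
  Mt (a,b) (sort2 x y) <= `|a-x| + `|b-y| /\ Mt (a,b) (sort2 x y) <= `|a-y| + `|b-x|.
Proof.
move=> hab; rewrite /Mt /sort2; case: (lerP x y) => h /=; split; normsplit; lra.
Qed.

Lemma Mt_ge0 (c z : config R) : 0 <= Mt c z.
Proof. rewrite /Mt; apply: addr_ge0; apply: normr_ge0. Qed.

Lemma step_spec (lam a b r : R) p : 0 <= lam <= 1 -> a <= b ->
  let c' := lambdaDC_step lam (a,b) r p in
  (r <= a /\ c' = (r,b)) \/ (a < r /\ b <= r /\ c' = (a,r)) \/
  exists u v, [/\ 0 <= v, v <= u, v = lam * u, a < r < b &
    ((c' = (a+u, b-v) /\ a + u <= r /\ r <= b - v /\ p = S1) \/
    (c' = (a+v, b-u) /\ a + v <= r /\ r <= b - u /\ p = S2))].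
Proof.
move=> /andP [l0 l1] hab /=; rewrite /lambdaDC_step.
case: (lerP r a) => h1; first by left.
case: (lerP b r) => h2; first by right; left.
right; right; case: p.
- case: (lerP (lam * (r - a)) (b - r)) => h3.
  + exists (r - a), (lam * (r - a)); split; [nra|nra|by []|lra|].
    left; split; first by congr pair; ring. split; first lra. split; first lra. by [].
  + have lp : 0 < lam by nra.
    have ln : lam != 0 by rewrite gt_eqF.
    have hu : lam * ((b - r) / lam) = b - r by field.
    have u0 : 0 <= (b - r) / lam by apply: divr_ge0; lra.
    exists ((b - r) / lam), (b - r); split; [nra|nra|by []|lra|].
    left; split; first by congr pair; ring. split; first nra. split; first nra. by [].
- case: (lerP (lam * (b - r)) (r - a)) => h3.
  + exists (b - r), (lam * (b - r)); split; [nra|nra|by []|lra|].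
    right; split; first by congr pair; ring. split; first lra. split; first lra. by [].
  + have lp : 0 < lam by nra.
    have ln : lam != 0 by rewrite gt_eqF.
    have hu : lam * ((r - a) / lam) = r - a by field.
    have u0 : 0 <= (r - a) / lam by apply: divr_ge0; lra.
    exists ((r - a) / lam), (r - a); split; [nra|nra|by []|lra|].
    right; split; first by congr pair; ring. split; first nra. split; first nra. by [].
Qed.

Lemma step_sorted (lam a b r : R) p : 0 <= lam <= 1 -> a <= b ->
  (lambdaDC_step lam (a,b) r p).1 <= (lambdaDC_step lam (a,b) r p).2.
Proof.
move=> hl hab; case: (@step_spec lam a b r p hl hab) => [[h ->]|[[h1 [h2 ->]]|[u [v [h0 h1 h2 /andP[h3 h4] [[-> [h5 [h6 _]]]|[-> [h5 [h6 _]]]]]]]]] /=; lra.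
Qed.

Lemma rK_A (a b x y r : R) : x <= y -> (r = x \/ r = y) -> r <= a -> a <= b ->
 Mt (r,b) (x,y) <= Mt (a,b) (x,y) - (a - r).
Proof. move=> hxy hr h hab; rewrite /Mt /=; case: hr => ?; subst; normsplit; lra. Qed.
Lemma rK_B (a b x y r : R) : x <= y -> (r = x \/ r = y) -> b <= r -> a <= b ->
 Mt (a,r) (x,y) <= Mt (a,b) (x,y) - (r - b).
Proof. move=> hxy hr h hab; rewrite /Mt /=; case: hr => ?; subst; normsplit; lra. Qed.
Lemma rK_C (a b x y r u v : R) : x <= y -> (r = x \/ r = y) -> 0 <= v -> v <= u -> a + u <= r -> r <= b - v ->
 Mt (a+u,b-v) (x,y) <= Mt (a,b) (x,y) + u - v.
Proof. move=> hxy hr h0 h1 h5 h6; rewrite /Mt /=; case: hr => ?; subst; normsplit; lra. Qed.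
Lemma rK_D (a b x y r u v : R) : x <= y -> (r = x \/ r = y) -> 0 <= v -> v <= u -> a + v <= r -> r <= b - u ->
 Mt (a+v,b-u) (x,y) <= Mt (a,b) (x,y) + u - v.
Proof. move=> hxy hr h0 h1 h5 h6; rewrite /Mt /=; case: hr => ?; subst; normsplit; lra. Qed.

Lemma mc_C (a b u v : R) : 0 <= u -> 0 <= v -> move_cost (a,b) (a+u,b-v) = u + v.
Proof.
move=> h1 h2; rewrite /move_cost /=.
have -> : a + u - a = u by ring. have -> : b - v - b = - v by ring.
by rewrite normrN !ger0_norm.
Qed.
Lemma mc_D (a b u v : R) : 0 <= u -> 0 <= v -> move_cost (a,b) (a+v,b-u) = u + v.
Proof. move=> h1 h2; rewrite mc_C // addrC //. Qed.

Lemma robK (lam a b x y r : R) p : 0 <= lam <= 1 -> a <= b -> x <= y -> (r = x \/ r = y) ->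
  let c' := lambdaDC_step lam (a,b) r p in
  lam * move_cost (a,b) c' + (1+lam) * Mt c' (x,y) + (c'.2 - c'.1)
    <= (1+lam) * Mt (a,b) (x,y) + (b - a).
Proof.
move=> hl hab hxy hr; have l1 : 0 <= 1 + lam by case/andP: hl => *; lra.
case: (@step_spec lam a b r p hl hab) => [[h ->]|[[h1 [h2 ->]]|[u [v [h0 h1 h2 /andP[h3 h4] [[-> [h5 [h6 _]]]|[-> [h5 [h6 _]]]]]]]]] /=.
- have K2 := ler_wpM2l l1 (rK_A hxy hr h hab).
  have Hm : move_cost (a,b) (r,b) = a - r.
    by rewrite /move_cost /= subrr normr0 addr0 ler0_norm; lra.
  rewrite Hm; lra.
- have K2 := ler_wpM2l l1 (rK_B hxy hr h2 hab).
  have Hm : move_cost (a,b) (a,r) = r - b.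
    by rewrite /move_cost /= subrr normr0 add0r ger0_norm; lra.
  rewrite Hm; lra.
- have K2 := ler_wpM2l l1 (rK_C hxy hr h0 h1 h5 h6).
  rewrite mc_C; [|lra|lra]. Time lra.
- have K2 := ler_wpM2l l1 (rK_D hxy hr h0 h1 h5 h6).
  rewrite mc_D; [|lra|lra]. Time lra.
Qed.

Lemma le_of2 (M A B X : R) : M <= A -> M <= B -> (A <= X \/ B <= X) -> M <= X.
Proof. by move=> hA hB [h|h]; [apply: le_trans hA h | apply: le_trans hB h]. Qed.

Lemma cK_A (a b x y r : R) p : x <= y -> r <= a -> a <= b ->
  Mt (r,b) (ftp_step (x,y) r p).1 <= Mt (a,b) (x,y) + (ftp_step (x,y) r p).2 - (a - r).
Proof.
move=> hxy h hab; have hrb : r <= b by lra.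
case: p => /=.
- have [m1 m2] := @Msort r b r y hrb; apply: (le_of2 m1 m2); clear m1 m2; rewrite /Mt /=; normsplit; first [left; lra | right; lra].
- have [m1 m2] := @Msort r b x r hrb; apply: (le_of2 m1 m2); clear m1 m2; rewrite /Mt /=; normsplit; first [left; lra | right; lra].
Qed.

Lemma cK_B (a b x y r : R) p : x <= y -> b <= r -> a <= b ->
  Mt (a,r) (ftp_step (x,y) r p).1 <= Mt (a,b) (x,y) + (ftp_step (x,y) r p).2 - (r - b).
Proof.
move=> hxy h hab; have hrb : a <= r by lra.
case: p => /=.
- have [m1 m2] := @Msort a r r y hrb; apply: (le_of2 m1 m2); clear m1 m2; rewrite /Mt /=; normsplit; first [left; lra | right; lra].
- have [m1 m2] := @Msort a r x r hrb; apply: (le_of2 m1 m2); clear m1 m2; rewrite /Mt /=; normsplit; first [left; lra | right; lra].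
Qed.

Lemma cK_C (a b x y r u v : R) : 0 <= v -> a + u <= r -> r <= b - v ->
  Mt (a+u,b-v) (ftp_step (x,y) r S1).1 <= Mt (a,b) (x,y) + (ftp_step (x,y) r S1).2 - u + v.
Proof.
move=> h0 h5 h6 /=; have hs : a + u <= b - v by lra.
have [m1 m2] := @Msort (a+u) (b-v) r y hs; apply: (le_trans m1); clear m1 m2; rewrite /Mt /=; normsplit; lra.
Qed.

Lemma cK_D (a b x y r u v : R) : 0 <= v -> a + v <= r -> r <= b - u ->
  Mt (a+v,b-u) (ftp_step (x,y) r S2).1 <= Mt (a,b) (x,y) + (ftp_step (x,y) r S2).2 - u + v.
Proof.
move=> h0 h5 h6 /=; have hs : a + v <= b - u by lra.
have [m1 m2] := @Msort (a+v) (b-u) x r hs; apply: (le_trans m1); clear m1 m2; rewrite /Mt /=; normsplit; lra.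
Qed.

Lemma conK (lam a b x y r : R) p : 0 <= lam <= 1 -> a <= b -> x <= y ->
  let c' := lambdaDC_step lam (a,b) r p in
  let zz := ftp_step (x,y) r p in
  move_cost (a,b) c' + (1+lam) * Mt c' zz.1 + lam * (c'.2 - c'.1)
    <= (1+lam) * zz.2 + (1+lam) * Mt (a,b) (x,y) + lam * (b - a).
Proof.
move=> hl hab hxy; have l1 : 0 <= 1 + lam by case/andP: hl => *; lra.
case: (@step_spec lam a b r p hl hab) => [[h ->]|[[h1 [h2 ->]]|[u [v [h0 h1 h2 /andP[h3 h4] [[-> [h5 [h6 ->]]]|[-> [h5 [h6 ->]]]]]]]]] /=.
- have K2 := ler_wpM2l l1 (@cK_A a b x y r p hxy h hab).
  have Hm : move_cost (a,b) (r,b) = a - r.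
    by rewrite /move_cost /= subrr normr0 addr0 ler0_norm; lra.
  rewrite Hm; lra.
- have K2 := ler_wpM2l l1 (@cK_B a b x y r p hxy h2 hab).
  have Hm : move_cost (a,b) (a,r) = r - b.
    by rewrite /move_cost /= subrr normr0 add0r ger0_norm; lra.
  rewrite Hm; lra.
- have K2 := ler_wpM2l l1 (@cK_C a b x y r u v h0 h5 h6).
  rewrite mc_C; [|lra|lra]. move: K2 => /=. lra.
- have K2 := ler_wpM2l l1 (@cK_D a b x y r u v h0 h5 h6).
  rewrite mc_D; [|lra|lra]. move: K2 => /=. lra.
Qed.
End S.

Section S2.
Variable R : realType.
Definition srt (z : config R) : config R := sort2 z.1 z.2.

Lemma srt_sorted (z : config R) : (srt z).1 <= (srt z).2.
Proof. exact: sort2_sorted. Qed.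

Lemma srt_mem (z : config R) r : r = z.1 \/ r = z.2 -> r = (srt z).1 \/ r = (srt z).2.
Proof. rewrite /srt /sort2; case: (lerP z.1 z.2) => /= _ [->|->]; tauto. Qed.

Lemma tri3 (p q m : R) : `|p - q| <= `|p - m| + `|q - m|.
Proof. normsplit; lra. Qed.

Lemma sortL (z0 z1 : config R) : move_cost (srt z0) (srt z1) <= move_cost z0 z1.
Proof.
case: z0 z1 => [x0 y0] [x1 y1]; rewrite /srt /sort2 /move_cost /=.
case: (lerP x0 y0) => h0; case: (lerP x1 y1) => h1 /=; normsplit; lra.
Qed.

Lemma advL (c z0 z1 : config R) :
  Mt c (srt z1) <= Mt c (srt z0) + move_cost z0 z1.
Proof.
have := sortL z0 z1; move: (srt z0) (srt z1) => s0 s1 h.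
rewrite /Mt; have := tri3 c.1 s1.1 s0.1; have := tri3 c.2 s1.2 s0.2.
move: h; rewrite /move_cost.
have -> : `|s1.1 - s0.1| = `|s0.1 - s1.1| by rewrite distrC.
have -> : `|s1.2 - s0.2| = `|s0.2 - s1.2| by rewrite distrC.
lra.
Qed.

Lemma schedule_cost_cons (r : R) rs sched :
  schedule_cost (r :: rs) sched =
  move_cost (sched 0%N) (sched 1%N) + schedule_cost rs (fun t => sched t.+1).
Proof. by rewrite /schedule_cost big_ord_recl. Qed.

Arguments lambdaDC_step : simpl never.
Arguments ftp_step : simpl never.


Lemma ftp_sorted1 (z : config R) r q : ((ftp_step z r q).1).1 <= ((ftp_step z r q).1).2.
Proof. case: z => x y; case: q; rewrite /ftp_step /=; exact: sort2_sorted. Qed.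

Lemma rob_gen (lam : R) : 0 <= lam <= 1 -> forall rs (c : config R) p sched,
  c.1 <= c.2 ->
  (forall t, (t < size rs)%N -> nth 0 rs t = (sched t.+1).1 \/ nth 0 rs t = (sched t.+1).2) ->
  lam * lambdaDC_cost lam c rs p <=
    (1 + lam) * schedule_cost rs sched + ((1 + lam) * Mt c (srt (sched 0%N)) + (c.2 - c.1)).
Proof.
move=> hl; have l1 : 0 <= 1 + lam by case/andP: hl => *; lra.
elim=> [|r rs IH] [a b] p sched /= hab hs.
  rewrite /schedule_cost big_ord0 mulr0 mulr0 add0r.
  have := Mt_ge0 (a,b) (srt (sched 0%N)) => hM.
  have := mulr_ge0 l1 hM; lra.
have hc' := @step_sorted R lam a b r (p 0%N) hl hab.
have hs' : forall t, (t < size rs)%N -> nth 0 rs t = (sched t.+2).1 \/ nth 0 rs t = (sched t.+2).2.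
  by move=> t ht; exact: (hs t.+1 ht).
have IH' := IH _ (fun t => p t.+1) (fun t => sched t.+1) hc' hs'.
have hr : r = (sched 1%N).1 \/ r = (sched 1%N).2 by exact: (hs 0%N erefl).
have hr' := srt_mem hr.
have hxy := srt_sorted (sched 1%N).
have L := ler_wpM2l l1 (advL (a,b) (sched 0%N) (sched 1%N)).
move: hr' hxy IH' L; case E: (srt (sched 1%N)) => [x y] /= hr' hxy IH' L.
have K := @robK R lam a b x y r (p 0%N) hl hab hxy hr'.
move: K IH'; rewrite /=.
set c' := lambdaDC_step lam (a,b) r (p 0%N) => K IH'.
rewrite schedule_cost_cons.
lra.
Qed.

Lemma con_gen (lam : R) : 0 <= lam <= 1 -> forall rs (c z : config R) p,
  c.1 <= c.2 -> z.1 <= z.2 ->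
  lambdaDC_cost lam c rs p <=
    (1 + lam) * ftp_cost z rs p + ((1 + lam) * Mt c z + lam * (c.2 - c.1)).
Proof.
move=> hl; have l1 : 0 <= 1 + lam by case/andP: hl => *; lra.
have l0 : 0 <= lam by case/andP: hl.
elim=> [|r rs IH] [a b] [x y] p /= hab hxy.
  rewrite mulr0 add0r.
  have := Mt_ge0 (a,b) (x,y) => hM.
  have := mulr_ge0 l1 hM; have : 0 <= lam * (b - a) by apply: mulr_ge0; lra.
  lra.
have hc' := @step_sorted R lam a b r (p 0%N) hl hab.
have hz' := @ftp_sorted1 (x,y) r (p 0%N).
have IH' := IH _ _ (fun t => p t.+1) hc' hz'.
have K := @conK R lam a b x y r (p 0%N) hl hab hxy.
move: K IH'; rewrite /=.
set c' := lambdaDC_step lam (a,b) r (p 0%N).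
set zz := ftp_step (x,y) r (p 0%N) => K IH'.
lra.
Qed.
End S2.

Unset Implicit Arguments.
Set Strict Implicit.

Theorem theorem4 (R : realType) (lam s1 s2 : R) :
  0 <= lam <= 1 -> s1 <= s2 ->
  exists c : R, 0 <= c /\
    forall (rs : seq R) (p : nat -> srv),
      lambdaDC_cost lam (s1, s2) rs p
        <= (1 + lam) * (OPT (s1, s2) rs + pred_error (s1, s2) rs p) + c /\
      (0 < lam ->
       lambdaDC_cost lam (s1, s2) rs p <= (1 + lam^-1) * OPT (s1, s2) rs + c).
Proof.
move=> hl h12.
have l0 : 0 <= lam by case/andP: hl.
have il0 : 0 <= lam^-1 by rewrite invr_ge0.
have d0 : 0 <= s2 - s1 by lra.
have A0 := mulr_ge0 l0 d0.
have A1 := mulr_ge0 il0 d0.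
exists (lam * (s2 - s1) + lam^-1 * (s2 - s1)); split; first lra.
move=> rs p; split.
  rewrite /pred_error [OPT _ _ + _]addrC subrK.
  have := @con_gen R lam hl rs (s1,s2) (s1,s2) p h12 h12.
  have -> : Mt (s1,s2) (s1,s2) = 0 by rewrite /Mt /= !subrr normr0 addr0.
  rewrite /=; lra.
move=> lp.
have ln : lam != 0 by rewrite gt_eqF.
set cost := lambdaDC_cost lam (s1, s2) rs p.
have Hb : forall sched, valid_schedule (s1,s2) rs sched ->
    cost <= (1 + lam^-1) * schedule_cost rs sched + lam^-1 * (s2 - s1).
  move=> sched [h0 hv].
  have := @rob_gen R lam hl rs (s1,s2) p sched h12 hv.
  rewrite h0 /srt /sort2 /= h12.
  have -> : Mt (s1,s2) (s1,s2) = 0 by rewrite /Mt /= !subrr normr0 addr0.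
  rewrite mulr0 add0r /= -/cost => H.
  have H2 := ler_wpM2l il0 H.
  have E1 : lam^-1 * (lam * cost) = cost by rewrite mulrA mulVf // mul1r.
  have E2 : lam^-1 * (lam * schedule_cost rs sched) = schedule_cost rs sched
    by rewrite mulrA mulVf // mul1r.
  lra.
have pos : 0 < 1 + lam^-1 by lra.
have : (cost - (lam * (s2 - s1) + lam^-1 * (s2 - s1))) / (1 + lam^-1) <= OPT (s1, s2) rs.
  apply: lb_le_inf.
    pose sch := fun t : nat => if t is t'.+1 then (nth 0 rs t', nth 0 rs t') else (s1, s2).
    exists (schedule_cost rs sch); exists sch => //.
    by split => // t _; left.
  move=> e [sched hv <-]; rewrite ler_pdivrMr //.
  have := Hb sched hv; lra.
rewrite ler_pdivrMr // => H; lra.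
Qed.
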